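(* Let $\mathfrak g=\mathfrak k+_\rho V$ be the semidirect sum of a finite-dimensional real Lie algebra $\mathfrak k$ and a commutative ideal $V$ via a representation $\rho:\mathfrak k\to\operatorname{End}(V)$. Let $f,g$ be polynomials on $\mathfrak g^*$ each satisfying $F(M,v)=F(M+L,v)$ for all $(M,v)\in\mathfrak g^*$ and $L\in\mathrm{St}_{\rho^*}(v)^\perp$, so that $f(M,v)=f_v(\pi_v(M))$ and $g(M,v)=g_v(\pi_v(M))$ for functions $f_v,g_v$ on $\mathrm{St}_{\rho^*}(v)^*$. Then $$\{f,g\}(M,v)=\{f_v,g_v\}_{\mathrm{St}_{\rho^*}(v)}(\pi_v(M)),$$ where the left side is the Lie–Poisson bracket of $\mathfrak g^*$ and the right side is the Lie–Poisson bracket on $\mathrm{St}_{\rho^*}(v)^*$.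
   Context: Elements of $\mathfrak g^*=\mathfrak k^*\oplus V^*$ are pairs $(M,v)$. $\rho^*:\mathfrak k\to\operatorname{End}(V^* )$ is the dual representation, $\mathrm{St}_{\rho^*}(v)=\{X\in\mathfrak k\mid\rho^*(X)v=0\}$, $\mathrm{St}_{\rho^*}(v)^\perp\subset\mathfrak k^*$ its annihilator, and $\pi_v:\mathfrak k^*\to\mathrm{St}_{\rho^*}(v)^*$ the restriction map. The Lie–Poisson bracket on $\mathfrak l^*$ for a Lie algebra $\mathfrak l$ is $\{f,g\}(x)=\langle x,[df(x),dg(x)]\rangle$. *)

(* Defs.v *)
From HB Require Import structures.
From mathcomp Require Import all_boot all_order all_algebra.
From mathcomp Require Import all_classical all_reals all_analysis.
Set Implicit Arguments. Unset Strict Implicit. Unset Printing Implicit Defensive.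
Import Order.TTheory GRing.Theory Num.Theory.
Local Open Scope ring_scope.

(* Coordinates: a real vector space of dimension N is 'rV[R]_N; its dual is
   also 'rV[R]_N via the standard pairing. *)
Definition pair (R : realType) (N : nat) (x y : 'rV[R]_N) : R :=
  \sum_(i < N) x 0 i * y 0 i.

Definition unitrow (R : realType) (N : nat) (i : 'I_N) : 'rV[R]_N :=
  delta_mx 0 i.

Inductive polyfun (R : realType) (N : nat) : ('rV[R]_N -> R) -> Prop :=
| pf_const (c : R) : polyfun (fun _ => c)
| pf_coord (i : 'I_N) : polyfun (fun x => x 0 i)
| pf_add f g : polyfun f -> polyfun g -> polyfun (fun x => f x + g x)
| pf_mul f g : polyfun f -> polyfun g -> polyfun (fun x => f x * g x).

(* Differential of f : l^* -> R at x, as an element of l (= l^{**}),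
   via partial derivatives. *)
Definition grad (R : realType) (N : nat) (f : 'rV[R]_N -> R) (x : 'rV[R]_N)
  : 'rV[R]_N :=
  \row_i (derive1 (fun t : R => f (x + t *: unitrow R i)) 0).

Definition LP (R : realType) (N : nat) (br : 'rV[R]_N -> 'rV[R]_N -> 'rV[R]_N)
  (f g : 'rV[R]_N -> R) (x : 'rV[R]_N) : R :=
  pair x (br (grad f x) (grad g x)).

Definition is_lie_bracket (R : realType) (N : nat)
  (br : 'rV[R]_N -> 'rV[R]_N -> 'rV[R]_N) : Prop :=
  [/\ forall (a : R) X Y Z, br (a *: X + Y) Z = a *: br X Z + br Y Z,
      forall X, br X X = 0 &
      forall X Y Z, br X (br Y Z) + br Y (br Z X) + br Z (br X Y) = 0].

Definition is_rep (R : realType) (n m : nat)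
  (br : 'rV[R]_n -> 'rV[R]_n -> 'rV[R]_n)
  (rho : 'rV[R]_n -> 'rV[R]_m -> 'rV[R]_m) : Prop :=
  [/\ forall (a : R) X Y u, rho (a *: X + Y) u = a *: rho X u + rho Y u,
      forall X (a : R) u w, rho X (a *: u + w) = a *: rho X u + rho X w &
      forall X Y u, rho (br X Y) u = rho X (rho Y u) - rho Y (rho X u)].

Definition sdbr (R : realType) (n m : nat)
  (br : 'rV[R]_n -> 'rV[R]_n -> 'rV[R]_n)
  (rho : 'rV[R]_n -> 'rV[R]_m -> 'rV[R]_m)
  (X Y : 'rV[R]_(n + m)) : 'rV[R]_(n + m) :=
  row_mx (br (lsubmx X) (lsubmx Y))
         (rho (lsubmx X) (rsubmx Y) - rho (lsubmx Y) (rsubmx X)).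

Definition dualrho (R : realType) (n m : nat)
  (rho : 'rV[R]_n -> 'rV[R]_m -> 'rV[R]_m) (X : 'rV[R]_n) (v : 'rV[R]_m)
  : 'rV[R]_m :=
  \row_j (- pair v (rho X (unitrow R j))).

Definition St (R : realType) (n m : nat)
  (rho : 'rV[R]_n -> 'rV[R]_m -> 'rV[R]_m) (v : 'rV[R]_m) (X : 'rV[R]_n)
  : Prop := dualrho rho X v = 0.

Definition StPerp (R : realType) (n m : nat)
  (rho : 'rV[R]_n -> 'rV[R]_m -> 'rV[R]_m) (v : 'rV[R]_m) (L : 'rV[R]_n)
  : Prop := forall X, St rho v X -> pair L X = 0.

(* A basis of St(v): the rows of B : 'M_(s,n).  Via B, St(v) = R^s
   (c |-> c *m B) and St(v)^* = R^s with the standard pairing. *)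
Definition is_St_basis (R : realType) (n m s : nat)
  (rho : 'rV[R]_n -> 'rV[R]_m -> 'rV[R]_m) (v : 'rV[R]_m) (B : 'M[R]_(s, n))
  : Prop := row_free B /\ forall X, St rho v X <-> (X <= B)%MS.

(* Restriction map pi_v : k^* -> St(v)^*, in the coordinates given by B. *)
Definition piB (R : realType) (n s : nat) (B : 'M[R]_(s, n)) (M : 'rV[R]_n)
  : 'rV[R]_s := \row_i pair M (row i B).

Definition brS (R : realType) (n s : nat)
  (br : 'rV[R]_n -> 'rV[R]_n -> 'rV[R]_n) (B : 'M[R]_(s, n))
  (c d : 'rV[R]_s) : 'rV[R]_s :=
  br (c *m B) (d *m B) *m pinvmx B.

(* Main.v *)
Require Import Defs.
From HB Require Import structures.
From mathcomp Require Import all_boot all_order all_algebra.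
From mathcomp Require Import all_classical all_reals all_analysis.
Import Order.TTheory GRing.Theory Num.Theory.
Local Open Scope ring_scope.
Set Implicit Arguments. Unset Strict Implicit.

Lemma pairE (R : realType) N (x y : 'rV[R]_N) : pair x y = (x *m y^T) 0 0.
Proof. by rewrite /pair !mxE; apply: eq_bigr => i _; rewrite mxE. Qed.

Lemma pair_unit (R : realType) N (w : 'rV[R]_N) i : pair w (unitrow R i) = w 0 i.
Proof.
rewrite /pair (bigD1 i) //= big1 => [|j ji].
  by rewrite /unitrow mxE !eqxx /= mulr1 addr0.
by rewrite /unitrow mxE eqxx /= (negbTE ji) mulr0.
Qed.

Lemma pairD (R : realType) N (w a b : 'rV[R]_N) : pair w (a + b) = pair w a + pair w b.
Proof. by rewrite /pair -big_split; apply: eq_bigr => j _; rewrite mxE mulrDr. Qed.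
Lemma pairZ (R : realType) N (w a : 'rV[R]_N) k : pair w (k *: a) = k * pair w a.
Proof. by rewrite /pair mulr_sumr; apply: eq_bigr => j _; rewrite mxE mulrCA. Qed.
Lemma pairC (R : realType) N (w a : 'rV[R]_N) : pair w a = pair a w.
Proof. by apply: eq_bigr => j _; rewrite mulrC. Qed.
Lemma pairB (R : realType) N (w a b : 'rV[R]_N) : pair w (a - b) = pair w a - pair w b.
Proof. by rewrite pairD -scaleN1r pairZ mulN1r. Qed.

Lemma polyfun_der (R : realType) N (P : 'rV[R]_N -> R) : polyfun P ->
  forall x, exists d : 'rV[R]_N, forall w,
    is_derive (0:R) (1:R) (fun t : R => P (x + t *: w)) (pair w d).
Proof.
elim => [c|i|f g _ IHf _ IHg|f g _ IHf _ IHg] x.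
- exists 0 => w; rewrite /pair big1 => [|j _]; last by rewrite mxE mulr0.
  exact: is_derive_cst.
- exists (unitrow R i) => w; rewrite pair_unit.
  have -> : (fun t : R => (x + t *: w) 0 i) = cst (x 0 i) + (fun t => t) * cst (w 0 i).
    by apply/funext => t; rewrite !mxE.
  apply: is_derive_eq.
  rewrite scaler0 !add0r /=; exact: mulr1.
- have [df Hf] := IHf x; have [dg Hg] := IHg x.
  exists (df + dg) => w.
  have -> : pair w (df + dg) = pair w df + pair w dg.
    by rewrite /pair -big_split; apply: eq_bigr => j _; rewrite mxE mulrDr.
  exact: (@is_deriveD _ _ _ (fun t : R => f (x + t *: w)) (fun t : R => g (x + t *: w))).
- have [df Hf] := IHf x; have [dg Hg] := IHg x.
  exists (f x *: dg + g x *: df) => w.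
  have := (@is_deriveM _ _ (fun t : R => f (x + t *: w)) (fun t : R => g (x + t *: w)) 0 1 _ _ (Hf w) (Hg w)).
  rewrite /= scale0r addr0 => H.
  apply: is_derive_eq.
  by rewrite pairD !pairZ.
Qed.

Lemma pair_row (R : realType) n m (a c : 'rV[R]_n) (b d : 'rV[R]_m) :
  pair (row_mx a b) (row_mx c d) = pair a c + pair b d.
Proof.
rewrite /pair big_split_ord /=; congr (_ + _); apply: eq_bigr => i _;
  by rewrite ?row_mxEl ?row_mxEr.
Qed.

Lemma pair0 (R : realType) N (a : 'rV[R]_N) : pair a 0 = 0.
Proof. by rewrite /pair big1 // => i _; rewrite mxE mulr0. Qed.

Lemma is_derive_uniq (R : realType) (h : R -> R) a b :
  is_derive (0:R) (1:R) h a -> is_derive (0:R) (1:R) h b -> a = b.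
Proof. by case=> _ <-; case=> _ <-. Qed.

Lemma derive1_is (R : realType) (h : R -> R) a :
  is_derive (0:R) (1:R) h a -> derive1 h 0 = a.
Proof. by rewrite derive1E => -[_ <-]. Qed.

Lemma grad_eq (R : realType) N (P : 'rV[R]_N -> R) x d :
  (forall w, is_derive (0:R) (1:R) (fun t : R => P (x + t *: w)) (pair w d)) ->
  grad P x = d.
Proof.
move=> H; apply/rowP => i; rewrite mxE (derive1_is (H (unitrow R i))).
by rewrite pairC pair_unit.
Qed.

Lemma perp_sub (R : realType) n s (B : 'M[R]_(s,n)) (X : 'rV[R]_n) :
 (forall L : 'rV_n, L *m B^T = 0 -> pair L X = 0) -> (X <= B)%MS.
Proof.
move=> H.
set K := kermx B^T.
have KB : K *m B^T = 0 := mulmx_ker _.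
have KX : X *m K^T = 0.
  apply/rowP => i; rewrite !mxE.
  rewrite -[RHS](H (row i K)); last by rewrite -row_mul KB row0.
  rewrite /pair; apply: eq_bigr => j _; by rewrite !mxE mulrC.
have S1 : (X <= kermx K^T)%MS by apply/sub_kermxP.
have S2 : (B <= kermx K^T)%MS.
  by apply/sub_kermxP; rewrite -[B]trmxK -trmx_mul KB trmx0.
have rk : \rank (kermx K^T) = \rank B.
  rewrite mxrank_ker mxrank_tr /K mxrank_ker mxrank_tr subKn //.
  exact: rank_leq_col.
have := (mxrank_leqif_sup S2).2; rewrite rk eqxx => /esym KsubB.
exact: submx_trans S1 KsubB.
Qed.

Lemma rho_perp (R : realType) n m br (rho : 'rV[R]_n -> 'rV[R]_m -> 'rV[R]_m) v X :
  is_rep br rho -> St rho v X -> forall u, pair v (rho X u) = 0.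
Proof.
move=> [_ Hlin _] HX u.
have e j : pair v (rho X (delta_mx 0 j)) = 0.
  have := congr1 (fun A : 'M[R]_(1,m) => A 0 j) (HX : dualrho rho X v = 0); rewrite !mxE => /eqP.
  by rewrite oppr_eq0 => /eqP.
have rho0 : rho X 0 = 0.
  by move: (Hlin X (-1) 0 0); rewrite scaler0 addr0 scaleN1r addNr.
rewrite (row_sum_delta u).
elim/big_ind: _ => [|a b Ha Hb|j _].
- by rewrite rho0 pair0.
- by have := Hlin X 1 a b; rewrite !scale1r => ->; rewrite pairD Ha Hb addr0.
- have := Hlin X (u 0 j) (delta_mx 0 j) 0; rewrite !addr0 rho0 addr0 => ->.
  by rewrite pairZ e mulr0.
Qed.

Lemma St_br (R : realType) n m br (rho : 'rV[R]_n -> 'rV[R]_m -> 'rV[R]_m) v X Y :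
  is_rep br rho -> St rho v X -> St rho v Y -> St rho v (br X Y).
Proof.
move=> Hr HX HY; have [_ _ Hbr] := Hr.
rewrite /St; apply/rowP => j; rewrite !mxE Hbr pairB.
by rewrite (rho_perp Hr HX) (rho_perp Hr HY) subrr oppr0.
Qed.

Lemma piBE (R : realType) n s (B : 'M[R]_(s,n)) a : piB B a = a *m B^T.
Proof. by apply/rowP => j; rewrite !mxE /pair; apply: eq_bigr => k _; rewrite !mxE. Qed.

Lemma pair_mul (R : realType) n s (a : 'rV[R]_n) (c : 'rV[R]_s) (B : 'M[R]_(s,n)) :
  pair a (c *m B) = pair (a *m B^T) c.
Proof. by rewrite !pairE trmx_mul mulmxA. Qed.

Lemma key (R : realType) n m (rho : 'rV[R]_n -> 'rV[R]_m -> 'rV[R]_m) s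
  (B : 'M[R]_(s,n)) v M (f : 'rV[R]_n -> 'rV[R]_m -> R) fv (dF : 'rV[R]_(n+m)) :
  is_St_basis rho v B ->
  (forall M v L, StPerp rho v L -> f (M + L) v = f M v) ->
  (forall M, f M v = fv (piB B M)) ->
  (forall w, is_derive (0:R) (1:R) (fun t : R => f (lsubmx (row_mx M v + t *: w))
      (rsubmx (row_mx M v + t *: w))) (pair w dF)) ->
  (lsubmx dF <= B)%MS /\ grad fv (piB B M) = lsubmx dF *m pinvmx B.
Proof.
move=> [Bfree BSt] If Hfv HF.
have Hd a : is_derive (0:R) (1:R) (fun t : R => f (M + t *: a) v) (pair a (lsubmx dF)).
  have := HF (row_mx a 0).
  have -> : pair (row_mx a 0) dF = pair a (lsubmx dF).
    by rewrite -{1}(hsubmxK dF) pair_row [pair 0 _]pairC pair0 addr0.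
  have -> // : (fun t : R => f (lsubmx (row_mx M v + t *: row_mx a 0))
      (rsubmx (row_mx M v + t *: row_mx a 0))) = (fun t : R => f (M + t *: a) v).
  apply/funext => t.
  by rewrite scale_row_mx scaler0 add_row_mx addr0 row_mxKl row_mxKr.
have perpB L : L *m B^T = 0 -> StPerp rho v L.
  move=> LB X /BSt XB; rewrite -(mulmxKpV XB) pair_mul LB pairC pair0 //.
have SF : (lsubmx dF <= B)%MS.
  apply: perp_sub => L LB.
  apply: (is_derive_uniq (Hd L)).
  have -> : (fun t : R => f (M + t *: L) v) = cst (f M v).
    apply/funext => t; apply: If; apply: perpB.
    by rewrite -scalemxAl LB scaler0.
  exact: is_derive_cst.
split => //.
have fullB : row_full B^T by rewrite /row_full mxrank_tr.
apply/rowP => i; rewrite mxE.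
set wi := unitrow R i *m pinvmx B^T.
have wiB : wi *m B^T = unitrow R i by rewrite mulmxKpV // submx_full.
have -> : (fun t : R => fv (piB B M + t *: unitrow R i)) = (fun t : R => f (M + t *: wi) v).
  apply/funext => t; rewrite Hfv !piBE mulmxDl -scalemxAl wiB //.
rewrite (derive1_is (Hd wi)).
rewrite -{1}(mulmxKpV SF) pair_mul wiB pairC pair_unit //.
Qed.

Theorem lemma12 (R : realType) (n m : nat)
  (br : 'rV[R]_n -> 'rV[R]_n -> 'rV[R]_n)
  (rho : 'rV[R]_n -> 'rV[R]_m -> 'rV[R]_m)
  (f g : 'rV[R]_n -> 'rV[R]_m -> R) :
  is_lie_bracket br -> is_rep br rho ->
  polyfun (fun x : 'rV[R]_(n + m) => f (lsubmx x) (rsubmx x)) ->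
  polyfun (fun x : 'rV[R]_(n + m) => g (lsubmx x) (rsubmx x)) ->
  (forall M v L, StPerp rho v L -> f (M + L) v = f M v) ->
  (forall M v L, StPerp rho v L -> g (M + L) v = g M v) ->
  forall (v : 'rV[R]_m) (s : nat) (B : 'M[R]_(s, n)),
  is_St_basis rho v B ->
  forall fv gv : 'rV[R]_s -> R,
  (forall M, f M v = fv (piB B M)) ->
  (forall M, g M v = gv (piB B M)) ->
  forall M : 'rV[R]_n,
  LP (sdbr br rho) (fun x => f (lsubmx x) (rsubmx x))
     (fun x => g (lsubmx x) (rsubmx x)) (row_mx M v)
  = LP (brS br B) fv gv (piB B M).
Proof.
move=> Hlie Hrep PF PG If Ig v s B HB fv gv Hfv Hgv M.
have [dF HF] := polyfun_der PF (row_mx M v).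
have [dG HG] := polyfun_der PG (row_mx M v).
have [SF gf] := key HB If Hfv HF.
have [SG gg] := key HB Ig Hgv HG.
have [_ BSt] := HB.
rewrite /LP (grad_eq HF) (grad_eq HG) gf gg /sdbr /brS !mulmxKpV //.
rewrite -{1}(hsubmxK dF) -{1}(hsubmxK dG) pair_row.
rewrite !row_mxKl pairB (rho_perp Hrep ((BSt _).2 SF)) (rho_perp Hrep ((BSt _).2 SG)) subrr addr0.
have ZB : (br (lsubmx dF) (lsubmx dG) <= B)%MS.
  by apply/BSt; apply: St_br => //; apply/BSt.
by rewrite pairC piBE -pair_mul mulmxKpV // pairC.
Qed.
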